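(* Assume the standing setting in the context, and assume that for every $\boldsymbol a\in\mathrm{Dom}(\boldsymbol A)$, $\Pr^+_\Omega(h(\boldsymbol x)\mid s_1,\boldsymbol a)\ge \Pr^+_\Omega(h(\boldsymbol x)\mid s_0,\boldsymbol a)$. Suppose the data selection does not depend directly on the admissible variables: let $\boldsymbol U\subseteq\boldsymbol X\cup\{Y\}$ with $S\notin\boldsymbol U$ and $\boldsymbol A\cap\boldsymbol U=\emptyset$ be such that, under $\Omega$, the full vector of variables $(\boldsymbol X,Y)$ (in particular $\boldsymbol A$ together with $\boldsymbol X$) is conditionally independent of $C$ given $(S,\boldsymbol U)$ (this holds, e.g., for $\boldsymbol U=\boldsymbol{Pa}(C)\setminus\{S\}$ when $\Omega$ is Markov compatible with a data collection diagram in which $C$ has no children and $\boldsymbol A\cap\boldsymbol{Pa}(C)=\emptyset$). Assume all conditional probabilities below are well defined (positivity). Then $$\digamma(\Omega)=\frac{1}{|\mathrm{Dom}(\boldsymbol A)|}\sum_{\boldsymbol a\in\mathrm{Dom}(\boldsymbol A)}\sum_{\boldsymbol u\in\mathrm{Dom}(\boldsymbol U)}\Big(\Pr^+_\Delta(h(\boldsymbol x)\mid s_1,\boldsymbol a,\boldsymbol u)\,w(s_1,\boldsymbol u,\boldsymbol a)-\Pr^+_\Delta(h(\boldsymbol x)\mid s_0,\boldsymbol a,\boldsymbol u)\,w(s_0,\boldsymbol u,\boldsymbol a)\Big),$$ where $$w(s,\boldsymbol u,\boldsymbol a)=\frac{\Delta(\boldsymbol A=\boldsymbol a\mid S=s,\boldsymbol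 U=\boldsymbol u)\,\Omega(S=s,\boldsymbol U=\boldsymbol u)}{\sum_{\boldsymbol u^*\in\mathrm{Dom}(\boldsymbol U)}\Delta(\boldsymbol A=\boldsymbol a\mid S=s,\boldsymbol U=\boldsymbol u^* )\,\Omega(S=s,\boldsymbol U=\boldsymbol u^* )}.$$ (In particular $\digamma(\Omega)$ is determined by $\Delta$ and the statistics $\Omega(S=s,\boldsymbol U=\boldsymbol u)$ alone.)
   Context: Standing setting. All variables have finite domains. $\boldsymbol X=(X_1,\dots,X_n)$ is a vector of features, $Y\in\{0,1\}$ is the label, and $C\in\{0,1\}$ is a selection indicator. $\Omega$ is a joint distribution of $(\boldsymbol X,Y,C)$; its marginal on $(\boldsymbol X,Y)$ is the target population. The biased distribution is $\Delta(\boldsymbol x,y)=\Omega(\boldsymbol x,y\mid C=1)$. A protected attribute $S$ is one of the features, with $\mathrm{Dom}(S)=\{s_0,s_1\}$. A set of admissible attributes $\boldsymbol A\subseteq \boldsymbol X\cup\{Y\}$ with $S\notin\boldsymbol A$ is fixed. A classifier is a function $h:\mathrm{Dom}(\boldsymbol X)\to\{0,1\}$. For a distribution $P$ and an event $E$, write $\Pr^+_P(h(\boldsymbol x)\mid E)=P(h(\boldsymbol X)=1\mid E)$; conditioning on $s,\boldsymbol a,\boldsymbol u$ means conditioning on $S=s,\boldsymbol A=\boldsymbol a,\boldsymbol U=\boldsymbol u$. The fairness query of $h$ on $P$ is $$\digamma(P)=\frac{1}{|\mathrm{Dom}(\boldsymbol A)|}\sum_{\boldsymbol a\in\mathrm{Dom}(\boldsymbol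 A)}\Big|\Pr^+_P(h(\boldsymbol x)\mid S=s_1,\boldsymbol A=\boldsymbol a)-\Pr^+_P(h(\boldsymbol x)\mid S=s_0,\boldsymbol A=\boldsymbol a)\Big|.$$ A data collection diagram is a DAG over $\boldsymbol X\cup\{Y\}\cup\{C\}$ in which $C$ has no children; $\boldsymbol{Pa}(C)$ is the set of parents of $C$. *)

(* Defs.v *)
From mathcomp Require Import all_boot all_order all_algebra.
Set Implicit Arguments. Unset Strict Implicit. Unset Printing Implicit Defensive.
Import Order.TTheory GRing.Theory Num.Theory.
Local Open Scope ring_scope.

Section Defs.
Variable R : realFieldType.

Definition Pr (T : finType) (P : T -> R) (E : pred T) : R := \sum_(t | E t) P t.

Definition Prc (T : finType) (P : T -> R) (E F : pred T) : R :=
  Pr P (fun t => E t && F t) / Pr P F.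

Variable XT : finType.
(* Omega is a distribution on Dom(X) x {0,1} (Y) x {0,1} (C). *)

Definition popul (Om : {ffun XT * bool * bool -> R}) : {ffun XT * bool -> R} :=
  [ffun xy => Om (xy, true) + Om (xy, false)].

(* biased distribution Delta(x,y) = Omega(x,y | C = 1) *)
Definition biased (Om : {ffun XT * bool * bool -> R}) : {ffun XT * bool -> R} :=
  [ffun xy => Om (xy, true) / Pr Om (fun t => t.2)].

Variables (AT UT : finType).

(* Pr^+_P(h(x) | S = s, A = a), with Dom(S) = {s0,s1} encoded as bool,
   s1 = true, s0 = false *)
Definition posrate (P : {ffun XT * bool -> R}) (h : XT -> bool)
  (S : XT -> bool) (A : XT * bool -> AT) (s : bool) (a : AT) : R :=
  Prc P (fun xy => h xy.1) (fun xy => (S xy.1 == s) && (A xy == a)).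

Definition posrateU (P : {ffun XT * bool -> R}) (h : XT -> bool)
  (S : XT -> bool) (A : XT * bool -> AT) (U : XT * bool -> UT)
  (s : bool) (a : AT) (u : UT) : R :=
  Prc P (fun xy => h xy.1)
    (fun xy => [&& S xy.1 == s, A xy == a & U xy == u]).

Definition fairness (P : {ffun XT * bool -> R}) (h : XT -> bool)
  (S : XT -> bool) (A : XT * bool -> AT) : R :=
  (#|AT|%:R)^-1 *
  \sum_(a : AT) `| posrate P h S A true a - posrate P h S A false a |.

Definition wnum (Om : {ffun XT * bool * bool -> R})
  (S : XT -> bool) (A : XT * bool -> AT) (U : XT * bool -> UT)
  (s : bool) (u : UT) (a : AT) : R :=
  Prc (biased Om) (fun xy => A xy == a)
      (fun xy => (S xy.1 == s) && (U xy == u))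
  * Pr (popul Om) (fun xy => (S xy.1 == s) && (U xy == u)).

Definition weight (Om : {ffun XT * bool * bool -> R})
  (S : XT -> bool) (A : XT * bool -> AT) (U : XT * bool -> UT)
  (s : bool) (u : UT) (a : AT) : R :=
  wnum Om S A U s u a / \sum_(u' : UT) wnum Om S A U s u' a.

(* (X,Y) is conditionally independent of C given (S,U) under Omega
   (product form of conditional independence) *)
Definition XY_indep_C_given_SU (Om : {ffun XT * bool * bool -> R})
  (S : XT -> bool) (U : XT * bool -> UT) : Prop :=
  forall (xy : XT * bool) (c s : bool) (u : UT),
    Pr Om (fun t => [&& t.1 == xy, t.2 == c, S t.1.1 == s & U t.1 == u])
    * Pr Om (fun t => (S t.1.1 == s) && (U t.1 == u))
    = Pr Om (fun t => [&& t.1 == xy, S t.1.1 == s & U t.1 == u])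
      * Pr Om (fun t => [&& t.2 == c, S t.1.1 == s & U t.1 == u]).

End Defs.

(* Main.v *)
Require Import Defs.
From mathcomp Require Import all_boot all_order all_algebra.
From mathcomp Require Import ring.
Import Order.TTheory GRing.Theory Num.Theory.
Local Open Scope ring_scope.
Set Implicit Arguments. Unset Strict Implicit.

Lemma prOm1 (R : realFieldType) (XT : finType) (Om : {ffun XT * bool * bool -> R})
  (Q : pred (XT * bool)) : Pr Om (fun t => Q t.1) = Pr (popul Om) Q.
Proof.
rewrite /Pr big_mkcond /=.
rewrite (eq_bigr (fun t => (fun p c => if Q p then Om (p,c) else 0) t.1 t.2)); last by case.
rewrite -(pair_bigA _ (fun p c => if Q p then Om (p,c) else 0)) /=.
rewrite [RHS]big_mkcond; apply: eq_bigr => p _; rewrite big_bool ffunE.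
by case: (Q p) => /=; rewrite ?addr0.
Qed.

Lemma prOm2 (R : realFieldType) (XT : finType) (Om : {ffun XT * bool * bool -> R})
  (Q : pred (XT * bool)) :
  Pr Om (fun t => t.2 && Q t.1) = \sum_(p | Q p) Om (p, true).
Proof.
rewrite /Pr big_mkcond /=.
rewrite (eq_bigr (fun t => (fun p c => if c && Q p then Om (p,c) else 0) t.1 t.2)); last by case.
rewrite -(pair_bigA _ (fun p c => if c && Q p then Om (p,c) else 0)) /=.
rewrite [RHS]big_mkcond; apply: eq_bigr => p _; rewrite big_bool /=.
by case: (Q p) => /=; rewrite ?addr0.
Qed.

Definition G (R : realFieldType) (XT : finType) (Om : {ffun XT * bool * bool -> R})
  (Q : pred (XT * bool)) := \sum_(p | Q p) Om (p, true).

Lemma prD (R : realFieldType) (XT : finType) (Om : {ffun XT * bool * bool -> R})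
  (Q : pred (XT * bool)) : Pr (biased Om) Q = G Om Q / Pr Om (fun t => t.2).
Proof. by rewrite /Pr /G mulr_suml; apply: eq_bigr => p _; rewrite ffunE. Qed.

Lemma Pr_ext (R : realFieldType) (T : finType) (P : T -> R) (E1 E2 : pred T) :
  E1 =1 E2 -> Pr P E1 = Pr P E2.
Proof. by move=> e; rewrite /Pr (eq_bigl _ _ e). Qed.

Lemma keyp (R : realFieldType) (XT UT : finType) (Om : {ffun XT * bool * bool -> R})
  (S : XT -> bool) (U : XT * bool -> UT) (CI : XY_indep_C_given_SU Om S U) xy :
  Om (xy, true) * Pr (popul Om) (fun p => (S p.1 == S xy.1) && (U p == U xy))
  = popul Om xy * G Om (fun p => (S p.1 == S xy.1) && (U p == U xy)).
Proof.
have := CI xy true (S xy.1) (U xy).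
set s := S xy.1; set u := U xy.
have Qe : forall p, [&& p == xy, S p.1 == s & U p == u] = (p == xy).
  by move=> p; case: eqP => [->|] //=; rewrite !eqxx.
have e1 : Pr Om (fun t => [&& t.1 == xy, t.2 == true, S t.1.1 == s & U t.1 == u])
   = Om (xy, true).
  rewrite (@Pr_ext _ _ _ _ (fun t => t.2 && [&& t.1 == xy, S t.1.1 == s & U t.1 == u])); last first.
    by move=> t; case: t.2; rewrite /= ?andbT ?andbF.
  by rewrite (prOm2 Om (fun p => [&& p == xy, S p.1 == s & U p == u])) (eq_bigl _ _ Qe) big_pred1_eq.
have e2 : Pr Om (fun t => [&& t.1 == xy, S t.1.1 == s & U t.1 == u]) = popul Om xy.
  rewrite (prOm1 Om (fun p => [&& p == xy, S p.1 == s & U p == u])).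
  by rewrite /Pr (eq_bigl _ _ Qe) big_pred1_eq.
have e3 : Pr Om (fun t => [&& t.2 == true, S t.1.1 == s & U t.1 == u])
   = G Om (fun p => (S p.1 == s) && (U p == u)).
  rewrite (@Pr_ext _ _ _ _ (fun t => t.2 && ((S t.1.1 == s) && (U t.1 == u)))); last first.
    by move=> t; case: t.2.
  by rewrite (prOm2 Om (fun p => (S p.1 == s) && (U p == u))).
rewrite e1 e2 e3 (prOm1 Om (fun p => (S p.1 == s) && (U p == u))).
done.
Qed.

Lemma keyE (R : realFieldType) (XT UT : finType) (Om : {ffun XT * bool * bool -> R})
  (S : XT -> bool) (U : XT * bool -> UT) (CI : XY_indep_C_given_SU Om S U)
  (s : bool) (u : UT) (E : pred (XT * bool))
  (HE : forall p, E p -> (S p.1 == s) && (U p == u)) :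
  G Om E * Pr (popul Om) (fun p => (S p.1 == s) && (U p == u))
  = Pr (popul Om) E * G Om (fun p => (S p.1 == s) && (U p == u)).
Proof.
rewrite /G /Pr !mulr_suml; apply: eq_bigr => p Ep.
have /andP[/eqP Hs /eqP Hu] := HE p Ep.
rewrite -Hs -Hu; exact: keyp.
Qed.

Lemma posfacts (R : realFieldType) (XT AT UT : finType)
  (Om : {ffun XT * bool * bool -> R})
  (Om_ge0 : forall t, 0 <= Om t) (S : XT -> bool)
  (A : XT * bool -> AT) (U : XT * bool -> UT)
  (posC : 0 < Pr Om (fun t => t.2)) (s : bool) (a : AT) (u : UT)
  (posD : 0 < Pr (biased Om) (fun xy => [&& S xy.1 == s, A xy == a & U xy == u])) :
  [/\ 0 < G Om (fun xy => [&& S xy.1 == s, A xy == a & U xy == u]),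
      0 < G Om (fun p => (S p.1 == s) && (U p == u)) &
      0 < Pr (popul Om) (fun p => (S p.1 == s) && (U p == u))].
Proof.
rewrite prD in posD.
have h1 : 0 < G Om (fun xy => [&& S xy.1 == s, A xy == a & U xy == u]).
  by move: posD; rewrite pmulr_lgt0 // invr_gt0.
have h2 : G Om (fun xy => [&& S xy.1 == s, A xy == a & U xy == u])
   <= G Om (fun p => (S p.1 == s) && (U p == u)).
  rewrite /G [X in X <= _]big_mkcond [X in _ <= X]big_mkcond /=.
  apply: ler_sum => p _.
  case: (S p.1 == s); case: (A p == a); case: (U p == u) => //=.
have h3 : G Om (fun p => (S p.1 == s) && (U p == u))
   <= Pr (popul Om) (fun p => (S p.1 == s) && (U p == u)).
  rewrite /G /Pr; apply: ler_sum => p _; rewrite ffunE lerDl //.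
split => //; first exact: lt_le_trans h1 h2.
exact: lt_le_trans (lt_le_trans h1 h2) h3.
Qed.

Lemma L12 (R : realFieldType) (XT AT UT : finType)
  (Om : {ffun XT * bool * bool -> R})
  (Om_ge0 : forall t, 0 <= Om t) (h : XT -> bool) (S : XT -> bool)
  (A : XT * bool -> AT) (U : XT * bool -> UT)
  (posC : 0 < Pr Om (fun t => t.2)) (CI : XY_indep_C_given_SU Om S U)
  (s : bool) (a : AT) (u : UT)
  (posD : 0 < Pr (biased Om) (fun xy => [&& S xy.1 == s, A xy == a & U xy == u])) :
  wnum Om S A U s u a = Pr (popul Om) (fun xy => [&& S xy.1 == s, A xy == a & U xy == u])
  /\ posrateU (biased Om) h S A U s a u
     * Pr (popul Om) (fun xy => [&& S xy.1 == s, A xy == a & U xy == u])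
     = Pr (popul Om) (fun xy => h xy.1 && [&& S xy.1 == s, A xy == a & U xy == u]).
Proof.
have [g2 gs m] := posfacts Om_ge0 posC posD.
set sau := (fun xy => [&& S xy.1 == s, A xy == a & U xy == u]) in posD g2 *.
set su := (fun p => (S p.1 == s) && (U p == u)) in gs m *.
have hs2 : forall p, sau p -> (S p.1 == s) && (U p == u).
  by move=> p /and3P[-> _ ->].
have hs1 : forall p, h p.1 && sau p -> (S p.1 == s) && (U p == u).
  by move=> p /andP[_ /and3P[-> _ ->]].
have k2 := @keyE _ _ _ Om S U CI s u sau hs2.
have k1 := @keyE _ _ _ Om S U CI s u (fun xy => h xy.1 && sau xy) hs1.
have P2e : Pr (popul Om) sau = G Om sau * Pr (popul Om) su / G Om su.
  by rewrite k2 mulfK // gt_eqF.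
have P1e : Pr (popul Om) (fun xy => h xy.1 && sau xy)
    = G Om (fun xy => h xy.1 && sau xy) * Pr (popul Om) su / G Om su.
  by rewrite k1 mulfK // gt_eqF.
have Z0 : Pr Om (fun t => t.2) != 0 by rewrite gt_eqF.
split.
  rewrite /wnum /Prc.
  rewrite (@Pr_ext _ _ _ _ sau); last first.
    by move=> p; rewrite /sau; case: (S p.1 == s); case: (A p == a); case: (U p == u).
  rewrite -/su !prD P2e.
  field; rewrite Z0 !gt_eqF //.
rewrite /posrateU /Prc -/sau !prD P1e P2e.
field; rewrite Z0 !gt_eqF //.
Qed.

Lemma partU (R : realFieldType) (XT UT : finType) (P : {ffun XT * bool -> R})
  (U : XT * bool -> UT) (F : pred (XT * bool)) :
  \sum_(u : UT) Pr P (fun p => F p && (U p == u)) = Pr P F.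
Proof. by rewrite /Pr (partition_big U xpredT). Qed.

Lemma sumterm (R : realFieldType) (XT AT UT : finType)
  (Om : {ffun XT * bool * bool -> R})
  (Om_ge0 : forall t, 0 <= Om t) (h : XT -> bool) (S : XT -> bool)
  (A : XT * bool -> AT) (U : XT * bool -> UT)
  (posC : 0 < Pr Om (fun t => t.2)) (CI : XY_indep_C_given_SU Om S U)
  (s : bool) (a : AT)
  (posD : forall u, 0 < Pr (biased Om) (fun xy => [&& S xy.1 == s, A xy == a & U xy == u])) :
  \sum_(u : UT) posrateU (biased Om) h S A U s a u * weight Om S A U s u a
  = posrate (popul Om) h S A s a.
Proof.
have W : forall u, wnum Om S A U s u a
   = Pr (popul Om) (fun xy => ((S xy.1 == s) && (A xy == a)) && (U xy == u)).
  move=> u; have [-> _] := @L12 _ _ _ _ Om Om_ge0 h S A U posC CI s a u (posD u).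
  by apply: Pr_ext => p; rewrite andbA.
have D : \sum_(u' : UT) wnum Om S A U s u' a = Pr (popul Om) (fun xy => (S xy.1 == s) && (A xy == a)).
  by rewrite (eq_bigr _ (fun u _ => W u)) partU.
rewrite /weight D.
rewrite (eq_bigr (fun u => Pr (popul Om) (fun xy => (h xy.1 && ((S xy.1 == s) && (A xy == a))) && (U xy == u))
    / Pr (popul Om) (fun xy => (S xy.1 == s) && (A xy == a)))); last first.
  move=> u _; have [W1 W2] := @L12 _ _ _ _ Om Om_ge0 h S A U posC CI s a u (posD u).
  rewrite W1 mulrA W2; congr (_ / _); apply: Pr_ext => p.
  by rewrite !andbA.
by rewrite -mulr_suml partU.
Qed.

Theorem proposition6 (R : realFieldType) (XT AT UT : finType)
  (Om : {ffun XT * bool * bool -> R})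
  (Om_ge0 : forall t, 0 <= Om t) (Om_sum1 : \sum_t Om t = 1)
  (h : XT -> bool) (S : XT -> bool)
  (A : XT * bool -> AT) (U : XT * bool -> UT)
  (* positivity: all conditional probabilities involved are well defined *)
  (posC : 0 < Pr Om (fun t => t.2))
  (posOm : forall (s : bool) (a : AT),
     0 < Pr (popul Om) (fun xy => (S xy.1 == s) && (A xy == a)))
  (posD : forall (s : bool) (a : AT) (u : UT),
     0 < Pr (biased Om) (fun xy => [&& S xy.1 == s, A xy == a & U xy == u]))
  (* Pr^+_Omega(h | s1, a) >= Pr^+_Omega(h | s0, a) *)
  (mono : forall a : AT,
     posrate (popul Om) h S A false a <= posrate (popul Om) h S A true a)
  (* (X,Y) independent of C given (S,U) under Omega *)
  (CI : XY_indep_C_given_SU Om S U) :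
  fairness (popul Om) h S A =
  (#|AT|%:R)^-1 *
  \sum_(a : AT) \sum_(u : UT)
     (posrateU (biased Om) h S A U true a u * weight Om S A U true u a
      - posrateU (biased Om) h S A U false a u * weight Om S A U false u a).
Proof.
rewrite /fairness; congr (_ * _); apply: eq_bigr => a _.
rewrite ger0_norm ?subr_ge0 // sumrB.
by rewrite !(@sumterm _ _ _ _ Om Om_ge0 h S A U posC CI _ a (posD _ a)).
Qed.
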